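(* The two-player Tower of Hanoi game under normal play on $l\ge 4$ pegs with $n\ge 3$ disks is a draw (neither player can force a win), for each of the ending conditions (EC1)–(EC5).
   Context: Tower of Hanoi on $l$ pegs (labeled $1,\dots,l$) with $n$ disks of pairwise distinct sizes: a position assigns each disk to a peg, disks on each peg stacked with sizes decreasing from bottom to top. A legal move transfers the top disk of one peg to a different peg that is empty or has a larger top disk. A tower position is one with all disks on one peg. Two-player game: Anh (first player) and Bao (second player) alternate moves starting from the position with all disks on Peg 1; a player may not move the disk that the opponent moved in the immediately preceding move. The game ends when the tower has been transferred to a final peg, according to one fixed ending condition: (EC1) all disks on a given peg distinct from Peg 1; (EC2) all disks on Peg 1, the largest disk having been moved at least once; (EC3) all disks on Peg 1, the smallest disk having been moved at least once; (EC4) all disks on any peg, the largest disk having been moved at least once; (EC5) all disks on any peg, the smallest disk having been moved at least once. A move creating a tower position that does not end the game (tower on a non-final peg) is not allowed. Normal play: the player who makes the last (game-ending) move wins; if neither player can force a win, the game is a draw. *)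

(* Defs.v *)
From mathcomp Require Import all_boot.
Set Implicit Arguments. Unset Strict Implicit. Unset Printing Implicit Defensive.

(* Pegs are the naturals 0 .. l-1; Peg 1 of the paper is peg 0 here.
   Disks are 'I_n; disk i has size i (0 = smallest, n-1 = largest).
   A position maps each disk to its peg; stacking order is forced by sizes. *)
Definition position (n : nat) := 'I_n -> nat.

Record state (n : nat) := State {
  pos : position n;
  last_moved : option 'I_n;
  largest_moved : bool;
  smallest_moved : bool }.

Definition tower n (p : position n) : Prop := exists q, forall d, p d = q.

Inductive ending := EC1 of nat | EC2 | EC3 | EC4 | EC5.

Definition valid_ending (l : nat) (e : ending) : Prop :=
  match e with EC1 f => 0 < f < l | _ => True end.

Definition game_over n (e : ending) (p : position n) (big small : bool) : Prop :=
  match e with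
  | EC1 f => forall d, p d = f
  | EC2 => (forall d, p d = 0) /\ big
  | EC3 => (forall d, p d = 0) /\ small
  | EC4 => tower p /\ big
  | EC5 => tower p /\ small
  end.

Definition move_pos n (p : position n) (d : 'I_n) (q : nat) : position n :=
  fun x => if x == d then q else p x.

Definition next_state n (s : state n) (d : 'I_n) (q : nat) : state n :=
  State (move_pos (pos s) d q) (Some d)
        (largest_moved s || (val d == n.-1))
        (smallest_moved s || (val d == 0)).

Definition ends n (e : ending) (s : state n) (d : 'I_n) (q : nat) : Prop :=
  let s' := next_state s d q in
  game_over e (pos s') (largest_moved s') (smallest_moved s').

Definition legal l n (e : ending) (s : state n) (d : 'I_n) (q : nat) : Prop :=
  q < l /\
  last_moved s <> Some d /\                                  (* no-undo rule *)
  (forall d', pos s d' = pos s d -> d <= d') /\              (* d is on top *)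
  q <> pos s d /\
  (forall d', pos s d' = q -> d < d') /\                     (* target empty or larger top *)
  (ends e s d q \/ ~ tower (move_pos (pos s) d q)).         (* no non-final tower *)

Inductive mover_wins l n (e : ending) : state n -> Prop :=
| MW s d q : legal l e s d q ->
             (ends e s d q \/ mover_loses l e (next_state s d q)) ->
             mover_wins l e s
with mover_loses l n (e : ending) : state n -> Prop :=
| ML s : (forall d q, legal l e s d q ->
             ~ ends e s d q /\ mover_wins l e (next_state s d q)) ->
         mover_loses l e s.

Definition init_state (n : nat) : state n := State (fun _ => 0) None false false.

Definition is_draw (l n : nat) (e : ending) : Prop :=
  ~ mover_wins l e (init_state n) /\ ~ mover_loses l e (init_state n).

(* Main.v *)
Require Import Defs.
From mathcomp Require Import all_boot.
From mathcomp Require Import zify.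

Set Implicit Arguments. Unset Strict Implicit. Unset Printing Implicit Defensive.

Section NoForce.
Variables (l n : nat) (e : ending) (G H : state n -> Prop).
Hypothesis HG : forall s, G s -> exists d q, legal l e s d q /\ H (next_state s d q).
Hypothesis HH : forall s, H s -> forall d q, legal l e s d q ->
  ~ ends e s d q /\ G (next_state s d q).

Fixpoint nf_w s (w : mover_wins l e s) {struct w} : ~ H s :=
  match w in mover_wins _ _ s0 return ~ H s0 with
  | MW s' d q Hl o => fun Hs =>
      match HH Hs Hl with
      | conj NE Gn =>
        match o with
        | or_introl E => NE E
        | or_intror L => nf_l L Gn
        end
      end
  end
with nf_l s (w : mover_loses l e s) {struct w} : ~ G s :=
  match w in mover_loses _ _ s0 return ~ G s0 with
  | ML s' F => fun Gs =>
      match HG Gs with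
      | ex_intro d (ex_intro q (conj Hl Hn)) =>
        match F d q Hl with
        | conj _ W => nf_w W Hn
        end
      end
  end.
End NoForce.

Lemma pick3 (a b c : nat) : exists r, r < 4 /\ r <> a /\ r <> b /\ r <> c.
Proof.
case: (boolP [|| a == 0, b == 0 | c == 0]) => H0; last by exists 0; lia.
case: (boolP [|| a == 1, b == 1 | c == 1]) => H1; last by exists 1; lia.
case: (boolP [|| a == 2, b == 2 | c == 2]) => H2; last by exists 2; lia.
by exists 3; lia.
Qed.

Lemma ends_tower n e (s : state n) d q : ends e s d q -> tower (move_pos (pos s) d q).
Proof.
case: e => [f||||] /=; rewrite /ends /game_over /=.
- by move=> H; exists f.
- by move=> [H _]; exists 0.
- by move=> [H _]; exists 0.
- by case.
- by case.
Qed.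

Section Main.
Variables (l n' : nat) (e : ending).
Hypothesis Hl : 4 <= l.
Let n := n'.+3.
Let d0 : 'I_n := Ordinal (n:=n) (m:=0) isT.
Let d1 : 'I_n := Ordinal (n:=n) (m:=1) isT.
Let d2 : 'I_n := Ordinal (n:=n) (m:=2) isT.

Lemma ordne (x y : 'I_n) : val x <> val y -> x <> y.
Proof. by move=> H E; apply: H; rewrite E. Qed.

Lemma valne (x y : 'I_n) : x <> y -> val x <> val y.
Proof. by move=> H E; apply: H; apply: val_inj. Qed.

Definition Gs (s : state n) : Prop :=
  last_moved s <> Some d0 \/ pos s d0 <> pos s d1 \/ pos s d1 <> pos s d2.
Definition Hs (s : state n) : Prop :=
  (last_moved s = Some d0 \/ pos s d1 <> pos s d2) \/ s = init_state n.

Lemma mpE (p : position n) d q x : move_pos p d q x = if x == d then q else p x.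
Proof. by []. Qed.

Lemma tower_d0 (p : position n) d q :
  tower (move_pos p d q) -> (forall d', p d' = q -> d < d') -> d = d0.
Proof.
move=> [Q HQ] Ht; apply: val_inj => /=.
case: (eqVneq d0 d) => [<-//|ne].
have := HQ d0; rewrite mpE (negPf ne) => E.
have := HQ d; rewrite mpE eqxx => E'.
have := Ht d0; rewrite E -E' => /(_ erefl) /=; lia.
Qed.

Lemma G_move s : Gs s -> exists d q, legal l e s d q /\ Hs (next_state s d q).
Proof.
move=> Gs0.
case: (boolP (last_moved s == Some d0)) => [/eqP Hlast|/eqP Hlast].
- have {}Gs0 : pos s d0 <> pos s d1 \/ pos s d1 <> pos s d2 by case: Gs0.
  case: (eqVneq (pos s d0) (pos s d1)) => [E01|N01].
  + have N12 : pos s d1 <> pos s d2 by case: Gs0 => // /(_ E01).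
    case: (pick3 (pos s d0) (pos s d2) (pos s d2)) => r [Hr [Ra [Rb _]]].
    exists d2, r; split; last first.
      by left; right => /=; rewrite !mpE /= -E01 => E; apply: Ra.
    split; first lia.
    split; first by rewrite Hlast => -[].
    split.
      move=> d' Hd'; have /valne: d' <> d0 by move=> E; rewrite E E01 in Hd'.
      have /valne: d' <> d1 by move=> E; rewrite E in Hd'.
      rewrite /=; lia.
    split; first by move=> E; apply: Rb.
    split.
      move=> d' Hd'; have /valne: d' <> d0 by move=> E; rewrite E in Hd'; apply: Ra.
      have /valne: d' <> d1 by move=> E; rewrite E -E01 in Hd'; apply: Ra.
      have /valne: d' <> d2 by move=> E; rewrite E in Hd'; apply: Rb.
      rewrite /=; lia.
    right => -[Q HQ]; have := HQ d1; have := HQ d2; rewrite !mpE /= => <- E.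
    by apply: Ra; rewrite E01.
  + case: (pick3 (pos s d0) (pos s d1) (pos s d2)) => r [Hr [Ra [Rb Rc]]].
    exists d1, r; split; last first.
      by left; right => /=; rewrite !mpE /=.
    split; first lia.
    split; first by rewrite Hlast => -[].
    split.
      move=> d' Hd'; have /valne: d' <> d0 by move=> E; rewrite E in Hd'; by rewrite Hd' eqxx in N01.
      rewrite /=; lia.
    split; first by move=> E; apply: Rb.
    split.
      move=> d' Hd'; have /valne: d' <> d0 by move=> E; rewrite E in Hd'; apply: Ra.
      have /valne: d' <> d1 by move=> E; rewrite E in Hd'; apply: Rb.
      rewrite /=; lia.
    right => -[Q HQ]; have := HQ d1; have := HQ d2; rewrite !mpE /= => <- E.
    by apply: Rc.
- case: (pick3 (pos s d0) (pos s d1) (pos s d1)) => r [Hr [Ra [Rb _]]].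
  exists d0, r; split; last by left; left.
  split; first lia.
  split; first by [].
  split; first by move=> d' _; rewrite /=.
  split; first by move=> E; apply: Ra.
  split.
    move=> d' Hd'; have /valne: d' <> d0 by move=> E; rewrite E in Hd'; apply: Ra.
    rewrite /=; lia.
  right => -[Q HQ]; have := HQ d1; have := HQ d0; rewrite !mpE /= => <- E.
  by apply: Rb.
Qed.

Lemma H_step s : Hs s -> forall d q, legal l e s d q ->
  ~ ends e s d q /\ Gs (next_state s d q).
Proof.
move=> Hs0 d q [Hq [Hlast [Htop [Hne [Htgt Hend]]]]].
split.
- move=> /ends_tower Ht.
  have Ed := tower_d0 Ht Htgt; subst d.
  case: Ht => Q HQ.
  case: Hs0 => [[E|N]|E].
  + by apply: Hlast.
  + apply: N; have := HQ d1; have := HQ d2; rewrite !mpE /= => <-.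
    by [].
  + move: Hne HQ; rewrite E /= => Hne HQ.
    apply: Hne; have := HQ d1; have := HQ d0; rewrite !mpE /= => <-.
    by [].
- case: (eqVneq d d0) => [Ed|Nd].
  + subst d. case: Hs0 => [[E|N]|E].
    * by case: Hlast.
    * by right; right; rewrite /= !mpE /=.
    * move: Hne; rewrite E /= => Hne.
      right; left; rewrite /= !mpE /= => E'; by apply: Hne.
  + by left => /= -[E]; apply: (negP Nd); rewrite E.
Qed.

End Main.

Theorem theorem2 (l n : nat) (e : ending) :
  4 <= l -> 3 <= n -> valid_ending l e -> is_draw l n e.
Proof.
move=> Hl; case: n => [|[|[|n']]] // _ _.
have W := nf_w (G_move e Hl) (@H_step l n' e Hl).
have L := nf_l (G_move e Hl) (@H_step l n' e Hl).
split.
- move=> w; apply: (W _ w); by right.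
- move=> w; apply: (L _ w); by left.
Qed.
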